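(* There exist integers $x,y$ such that $s_{16,16}x^2+s_{32}y\in\{1,-1\}$.
   Context: $s_I$ is the coefficient of $p_I$ in the Hirzebruch $\mathcal{L}$-polynomial $\mathcal{L}_k=\sum_{|I|=k}s_Ip_I$ (multiplicative sequence with characteristic power series $\sqrt t/\tanh\sqrt t$); $s_k=\frac{2^{2k}(2^{2k-1}-1)|B_{2k}|}{(2k)!}$ and $s_{k,k}=\tfrac12(s_k^2-s_{2k})$, with $B_j$ the Bernoulli numbers. (This is the signature equation for a $128$-dimensional rational projective plane.) *)

(* Defs.v *)
From HB Require Import structures.
From mathcomp Require Import all_boot all_order all_algebra.
Set Implicit Arguments. Unset Strict Implicit. Unset Printing Implicit Defensive.
Import Order.TTheory GRing.Theory Num.Theory.
Local Open Scope ring_scope.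

(* Bernoulli numbers B_0, B_1, ... (convention B_1 = -1/2; irrelevant here since
   only even indices are used), via the standard recursion
   B_0 = 1,  B_m = - 1/(m+1) * \sum_{k<m} C(m+1,k) B_k.
   bern_upto n is the list [:: B_0; ...; B_n]; the sum over k = 0..m-1 is
   written as a foldr over iota 0 m (i.e. \sum_(0 <= k < m), computably). *)
Fixpoint bern_upto (n : nat) : seq rat :=
  match n with
  | 0%N => [:: 1]
  | n'.+1 =>
      let s := bern_upto n' in
      rcons s (- (foldr (fun k acc => ('C(n'.+2, k))%:R * s`_k + acc) 0 (iota 0 n'.+1))
                / (n'.+2)%:R)
  end.

Definition bernoulli (n : nat) : rat := (bern_upto n)`_n.

(* s_k = 2^{2k} (2^{2k-1} - 1) |B_{2k}| / (2k)!  (coefficient of p_k in L_k) *)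
Definition s_k (k : nat) : rat :=
  (2 ^+ (2 * k)) * (2 ^+ (2 * k).-1 - 1) * `|bernoulli (2 * k)| / ((2 * k)`!)%:R.

Definition s_kk (k : nat) : rat := (s_k k ^+ 2 - s_k (2 * k)) / 2.

(* Main.v *)
Require Import Defs.
From HB Require Import structures.
From mathcomp Require Import all_boot all_order all_algebra.
From Stdlib Require Import ZArith QArith Qabs.
From mathcomp Require Import ssrZ zify.
From Stdlib Require Import Lia.
From mathcomp Require Import ring.
Import ssrZ.Instances.Exports.
Import Order.TTheory GRing.Theory Num.Theory.
Local Open Scope ring_scope.

Definition zr (z : Z) : rat := (int_of_Z z)%:~R.

Lemma zrD a b : zr (a + b)%Z = zr a + zr b.
Proof. by rewrite /zr (rmorphD int_of_Z) intrD. Qed.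
Lemma zrM a b : zr (a * b)%Z = zr a * zr b.
Proof. by rewrite /zr (rmorphM int_of_Z) intrM. Qed.
Lemma zrN a : zr (- a)%Z = - zr a.
Proof. by rewrite /zr (rmorphN int_of_Z) mulrNz. Qed.
Lemma zr0 : zr 0%Z = 0. Proof. by []. Qed.
Lemma zr1 : zr 1%Z = 1. Proof. by []. Qed.
Lemma zr_nat n : zr (Z.of_nat n) = n%:R.
Proof. elim: n => // n IH. rewrite Nat2Z.inj_succ -Z.add_1_r zrD IH zr1 -natr1 //. Qed.
Lemma zr_pos_gt0 p : 0 < zr (Zpos p).
Proof. rewrite /zr /= ltr0n. lia. Qed.
Lemma zr_abs a : zr (Z.abs a) = `|zr a|.
Proof.
case: a => [|p|p] //=.
  by rewrite gtr0_norm // zr_pos_gt0.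
by rewrite -[Zneg p]/(- Zpos p)%Z zrN normrN gtr0_norm // zr_pos_gt0.
Qed.
Definition q2r (q : Q) : rat := zr (Qnum q) / zr (Zpos (Qden q)).

Lemma zr_pos_neq0 p : zr (Zpos p) != 0.
Proof. by rewrite gt_eqF // zr_pos_gt0. Qed.

Lemma zr_posM p q : zr (Zpos (p * q)) = zr (Zpos p) * zr (Zpos q).
Proof. by rewrite -zrM. Qed.

Lemma q2rD x y : q2r (x + y)%Q = q2r x + q2r y.
Proof.
case: x y => [a p] [b q]; rewrite /q2r /Qplus /= zrD !zrM zr_posM.
have hp := zr_pos_neq0 p; have hq := zr_pos_neq0 q.
by field; rewrite hp hq.
Qed.
Lemma q2rM x y : q2r (x * y)%Q = q2r x * q2r y.
Proof.
case: x y => [a p] [b q]; rewrite /q2r /Qmult /= !zrM zr_posM.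
have hp := zr_pos_neq0 p; have hq := zr_pos_neq0 q.
by field; rewrite hp hq.
Qed.
Lemma q2rN x : q2r (- x)%Q = - q2r x.
Proof. by case: x => [a p]; rewrite /q2r /Qopp /= zrN mulNr. Qed.
Lemma q2rV x : q2r (/ x)%Q = (q2r x)^-1.
Proof.
case: x => [[|a|a] p]; rewrite /q2r /Qinv /=.
- by rewrite zr0 !mul0r invr0.
- by rewrite invf_div.
- rewrite invf_div -[Zneg a]/(- Zpos a)%Z -[Zneg p]/(- Zpos p)%Z !zrN.
  by rewrite invrN mulrN mulNr.
Qed.
Lemma q2r_eq x y : (x == y)%Q -> q2r x = q2r y.
Proof.
case: x y => [a p] [b q]; rewrite /Qeq /q2r /= => h.
have hp := zr_pos_neq0 p; have hq := zr_pos_neq0 q.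
have := congr1 zr h; rewrite !zrM => h'.
apply/eqP; rewrite eqr_div //; exact/eqP.
Qed.
Lemma q2r_red x : q2r (Qred x) = q2r x.
Proof. by apply: q2r_eq; apply: Qred_correct. Qed.
Lemma q2r_abs x : q2r (Qabs x) = `|q2r x|.
Proof.
case: x => [a p]; rewrite /q2r /Qabs /= zr_abs normrM normfV.
by rewrite (gtr0_norm (zr_pos_gt0 p)).
Qed.
Lemma q2r_Z z : q2r (inject_Z z) = zr z.
Proof. by rewrite /q2r /= zr1 divr1. Qed.

Fixpoint Zfact (n : nat) : Z := match n with O => 1%Z | S m => (Z.of_nat n * Zfact m)%Z end.
Lemma Zfact_ok n : Z.of_nat (n`!) = Zfact n.
Proof. elim: n => // n IH. by rewrite factS /= -IH Nat2Z.inj_mul. Qed.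
Definition Zbin (n k : nat) : Z := (Zfact n / (Zfact k * Zfact (n - k)))%Z.
Lemma Zbin_ok (n k : nat) : leq k n -> Z.of_nat 'C(n, k) = Zbin n k.
Proof.
move=> hk; rewrite /Zbin -!Zfact_ok -(bin_fact hk) !Nat2Z.inj_mul Z.div_mul //.
have := fact_gt0 k; have := fact_gt0 (n - k); lia.
Qed.

Lemma nth_map0 (A B : Type) (f : A -> B) x0 y0 s k : f x0 = y0 ->
  nth y0 (map f s) k = f (nth x0 s k).
Proof. move=> h; elim: s k => [|a s IH] [|k] //=. Qed.

Fixpoint bernQ (n : nat) : seq Q :=
  match n with
  | O => [:: 1%Q]
  | n'.+1 =>
      let s := bernQ n' in
      rcons s (Qred (- (foldr (fun k acc => Qred (inject_Z (Zbin n'.+2 k) * nth 0%Q s k + acc)) 0%Q (iota 0 n'.+1))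
                / inject_Z (Z.of_nat n'.+2)))
  end.

Lemma q2r0 : q2r 0%Q = 0. Proof. by rewrite /q2r zr0 mul0r. Qed.

Arguments Qred : simpl never.
Arguments Qplus : simpl never.
Arguments Qmult : simpl never.
Arguments Qopp : simpl never.
Arguments Qdiv : simpl never.
Arguments Qinv : simpl never.
Arguments iota : simpl never.
Lemma foldr_ok N s t l : s = map q2r t -> all (fun k => leq k N) l ->
  foldr (fun k acc => ('C(N, k))%:R * s`_k + acc) 0 l =
  q2r (foldr (fun k acc => Qred (inject_Z (Zbin N k) * nth 0%Q t k + acc)) 0%Q l).
Proof.
move=> -> ; elim: l => [|k l IHl] /=; first by rewrite q2r0.
move=> /andP [hk hl].
rewrite q2r_red q2rD q2rM q2r_Z -(@Zbin_ok _ _ hk) zr_nat (IHl hl).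
by rewrite (@nth_map0 _ _ q2r 0%Q 0 t k q2r0).
Qed.

Lemma bernQ_ok n : bern_upto n = map q2r (bernQ n).
Proof.
elim: n => [|n IH] /=.
  by rewrite /q2r zr1 divr1.
rewrite map_rcons -IH; congr rcons.
rewrite q2r_red /Qdiv q2rM q2rV q2rN q2r_Z.
rewrite -[zr (Zpos _)]/(zr (Z.of_nat n.+2)) zr_nat; congr (- _ / _).
have hl : all (fun k => leq k n.+2) (iota 0 n.+1).
  by apply/allP => k; rewrite mem_iota => /andP [_ h]; apply: ltnW; apply: ltnW.
exact: (@foldr_ok n.+2 _ _ (iota 0 n.+1) IH hl).
Qed.

Lemma zrX a m : zr (a ^ Z.of_nat m)%Z = zr a ^+ m.
Proof.
elim: m => [|m IH]; first by rewrite expr0.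
by rewrite Nat2Z.inj_succ Z.pow_succ_r ?zrM ?IH ?exprS // ; lia.
Qed.

Definition sQ (k : nat) : Q :=
  Qred (inject_Z (2 ^ Z.of_nat (2 * k)) * (inject_Z (2 ^ Z.of_nat (2 * k).-1) - 1)
        * Qabs (nth 0%Q (bernQ (2 * k)) (2 * k)) / inject_Z (Zfact (2 * k))).

Lemma q2r1 : q2r 1%Q = 1. Proof. by rewrite /q2r zr1 divr1. Qed.

Lemma sQ_ok k : s_k k = q2r (sQ k).
Proof.
rewrite /sQ /s_k q2r_red /Qdiv !q2rM q2rV /Qminus q2rD q2rN q2r1 q2r_abs !q2r_Z.
rewrite !zrX -Zfact_ok zr_nat.
have -> : zr 2 = 2 by rewrite -[2%Z]/(Z.of_nat 2) zr_nat.
by rewrite /bernoulli bernQ_ok (@nth_map0 _ _ q2r 0%Q 0 _ _ q2r0).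
Qed.

Definition X : Z := 78354170704306103369105111162661909383680827384399539776975%Z.
Definition Y : Z := 1429431568083735438429931567508013873723196123249454409130324866245387503540042011183968464732113303526468250%Z.

Definition skkQ (k : nat) : Q := ((sQ k * sQ k - sQ (2 * k)) / inject_Z 2)%Q.

Lemma skkQ_ok k : s_kk k = q2r (skkQ k).
Proof.
rewrite /s_kk /skkQ /Qdiv q2rM q2rV /Qminus q2rD q2rN q2rM q2r_Z -!sQ_ok expr2.
by rewrite -[2%Z]/(Z.of_nat 2) zr_nat.
Qed.

Lemma intZ_q z : (int_of_Z z)%:~R = q2r (inject_Z z) :> rat.
Proof. by rewrite q2r_Z. Qed.


Lemma final0 (a b : Q) (z1 z2 : Z) :
  (a * inject_Z z1 * inject_Z z1 + b * inject_Z z2 == 1)%Q ->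
  q2r a * ((int_of_Z z1)%:~R) ^+ 2 + q2r b * (int_of_Z z2)%:~R = 1 :> rat.
Proof.
move=> h.
rewrite (intZ_q z1) (intZ_q z2) -q2r1 expr2 mulrA -!q2rM -q2rD.
exact: (@q2r_eq _ _ h).
Qed.

Lemma final (z1 z2 : Z) :
  (skkQ 16 * inject_Z z1 * inject_Z z1 + sQ 32 * inject_Z z2 == 1)%Q ->
  s_kk 16 * ((int_of_Z z1)%:~R) ^+ 2 + s_k 32 * (int_of_Z z2)%:~R = 1 :> rat.
Proof. by move=> h; rewrite skkQ_ok sQ_ok; apply: final0. Qed.

Lemma key : (skkQ 16 * inject_Z X * inject_Z X + sQ 32 * inject_Z Y == 1)%Q.
Proof. vm_compute. reflexivity. Qed.

Theorem proposition3p4 :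
  exists x y : int,
    (s_kk 16 * (x%:~R) ^+ 2 + s_k 32 * y%:~R = 1 :> rat) \/
    (s_kk 16 * (x%:~R) ^+ 2 + s_k 32 * y%:~R = -1 :> rat).
Proof.
exists (int_of_Z X), (int_of_Z Y); left.
exact: (@final _ _ key).
Qed.
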